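(* Consider offline data $\{(s_h^k,a_h^k,r_h^k)\}_{h\in[H]}^{k\in[K]}$ from a behavior policy $\mu$ in a linear MDP, with $\Sigma_h^k=\sum_{t=1}^{k-1}\phi_h(s_h^t,a_h^t)\phi_h(s_h^t,a_h^t)^T+I$. Assume there exists an optimal policy $\pi^*$ with $d^{\pi^*}_h(s,a)>0\implies d^\mu_h(s,a)>0$ for all $(h,s,a)$, and that $\kappa_h^{-1}:=\inf_{(s,a):d^\mu_h(s,a)>0}d^\mu_h(s,a)>0$ for all $h$. Then for any $h\in[H]$, \[ \sum_{k=1}^K\frac{d^*_h(s_h^k,a_h^k)}{d^\mu_h(s_h^k,a_h^k)}\|\phi_h(s_h^k,a_h^k)\|_{(\Sigma_h^k)^{-1}}\le\kappa_h\sqrt{2Kd\log(1+K/d)}, \] where $d^*_h=d^{\pi^*}_h$.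
   Context: Episodic MDP with horizon $H$; $d^\pi_h(s,a)$ is the state-action visitation density at step $h$ under policy $\pi$, assumed $\le1$. Linear MDP: known features $\phi_h:\mathcal{S}\times\mathcal{A}\to\mathbb{R}^d$ with $\|\phi_h(s,a)\|_2\le1$ (rewards and transitions linear in $\phi_h$). $\|x\|_A=\sqrt{x^TAx}$. *)

(* Defs.v *)
From HB Require Import structures.
From mathcomp Require Import all_boot all_order all_algebra.
From mathcomp Require Import all_classical all_reals all_analysis.
Set Implicit Arguments. Unset Strict Implicit. Unset Printing Implicit Defensive.
Import Order.TTheory GRing.Theory Num.Theory.
Local Open Scope ring_scope.
Local Open Scope classical_set_scope.

Definition vnorm2 (R : realType) (d : nat) (x : 'cV[R]_d) : R :=
  Num.sqrt (\sum_(i < d) x i 0 ^+ 2).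

Definition mxnorm (R : realType) (d : nat) (A : 'M[R]_d) (x : 'cV[R]_d) : R :=
  Num.sqrt ((x^T *m A *m x) 0 0).

(* Sigma_h^k with 0-based episode index k : sum over earlier episodes t < k,
   plus the identity.  feat t = phi_h(s_h^t, a_h^t). *)
Definition Sigma (R : realType) (d : nat) (feat : nat -> 'cV[R]_d) (k : nat)
  : 'M[R]_d :=
  1%:M + \sum_(t < k) feat t *m (feat t)^T.

Definition kappa_inv (R : realType) (S A : Type) (dmu : S -> A -> R) : R :=
  inf [set x : R | exists s a, 0 < dmu s a /\ x = dmu s a].

(* Main.v *)
Require Import Defs.
From HB Require Import structures.
From mathcomp Require Import all_boot all_order all_algebra.
From mathcomp Require Import all_classical all_reals all_analysis.
From mathcomp Require Import ring lra.
Import Order.TTheory GRing.Theory Num.Theory.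
Local Open Scope ring_scope.

Lemma det_rank1 (R : comNzRingType) n (u v : 'cV[R]_n) :
  \det (1%:M + u *m v^T) = 1 + (v^T *m u) 0 0.
Proof.
have E1 : block_mx (1%:M : 'M[R]_1) v^T (-u) 1%:M =
   block_mx 1%:M 0 (-u) 1%:M *m block_mx 1%:M v^T 0 (1%:M + u *m v^T).
  rewrite mulmx_block ?mul1mx ?mul0mx ?mulmx0 ?mulmx1 ?addr0 ?add0r.
  by rewrite mulNmx addrA addrAC addNr add0r.
have E2 : block_mx (1%:M : 'M[R]_1) v^T (-u) 1%:M =
   block_mx (1%:M + v^T *m u) v^T 0 1%:M *m block_mx 1%:M 0 (-u) 1%:M.
  rewrite mulmx_block ?mul1mx ?mul0mx ?mulmx0 ?mulmx1 ?addr0 ?add0r.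
  by rewrite mulmxN addrK.
have := congr1 determinant E1; rewrite {1}E2 !det_mulmx !det_lblock !det_ublock.
rewrite !det1 !mul1r !mulr1 => <-.
by rewrite det_mx11 !mxE eqxx.
Qed.

Definition qf {R : numDomainType} {n} (P : 'M[R]_n) (z : 'cV[R]_n) : R :=
  (z^T *m P *m z) 0 0.

Lemma hadamard (R : realFieldType) n (P : 'M[R]_n) :
  P^T = P -> (forall z, z != 0 -> 0 < qf P z) ->
  0 < \det P /\ \det P <= \prod_i P i i.
Proof.
elim: n P => [|n IH] P Psym Ppd.
  by rewrite det_mx00 big_ord0 ltr01 lexx.
move: P Psym Ppd; change n.+1 with (1 + n)%N => P Psym Ppd.
pose a := @ulsubmx R 1 n 1 n P; pose bT := @ursubmx R 1 n 1 n P.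
pose b := @dlsubmx R 1 n 1 n P; pose C := @drsubmx R 1 n 1 n P.
have PE : P = block_mx a bT b C by rewrite /a /bT /b /C submxK.
have bTE : bT = b^T by rewrite /b trmx_dlsub Psym.
have CS : C^T = C by rewrite /C trmx_drsub Psym.
have qfP (Z1 : 'M[R]_1) (Z2 : 'cV[R]_n) : qf P (col_mx Z1 Z2) =
   ((Z1^T *m a + Z2^T *m b) *m Z1 + (Z1^T *m bT + Z2^T *m C) *m Z2) 0 0.
  by rewrite /qf {1}PE tr_col_mx mul_row_block mul_row_col.
have Cpd : forall z, z != 0 -> 0 < qf C z.
  move=> z nz; have := Ppd (col_mx 0 z).
  rewrite col_mx_eq0 eqxx (negPf nz) qfP trmx0 !mul0mx !mulmx0 !add0r.
  by apply.
have [dC0 dCle] := IH C CS Cpd.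
have Cu : C \in unitmx by rewrite unitmxE unitfE gt_eqF.
pose y := invmx C *m b.
pose sc := a - bT *m y.
have Cy : C *m y = b by rewrite /y mulKVmx.
have fact : P = block_mx 1%:M (bT *m invmx C) 0 1%:M *m block_mx sc 0 b C.
  rewrite mulmx_block ?mul1mx ?mul0mx ?mulmx0 ?add0r ?addr0 mulmxKV //.
  by rewrite /sc -mulmxA -/y subrK.
have detE : \det P = sc 0 0 * \det C.
  by rewrite {1}fact det_mulmx det_ublock det_lblock !det1 !mul1r det_mx11; reflexivity.
have sc_pos : 0 < sc 0 0.
  have := Ppd (col_mx 1%:M (- y)).
  rewrite col_mx_eq0 oner_eq0 /= => /(_ isT).
  rewrite /qf -mulmxA {1}PE mul_block_col !mulmxN Cy !mulmx1 addrN -/sc.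
  by rewrite tr_col_mx mul_row_col mulmx0 addr0 trmx1 mul1mx.
have byge0 : 0 <= (bT *m y) 0 0.
  have -> : bT *m y = y^T *m C *m y by rewrite bTE -Cy trmx_mul CS.
  have [->|ny] := eqVneq y 0; first by rewrite mulmx0 mxE.
  exact/ltW/Cpd.
split; first by rewrite detE mulr_gt0.
rewrite detE; change (1+n)%N with n.+1; rewrite big_ord_recl.
apply: ler_pM; [exact: ltW|exact: ltW| |].
  have e : sc 0 0 = P ord0 ord0 - (bT *m y) 0 0 by rewrite /sc /a !mxE lshift0.
  by rewrite e gerDl oppr_le0.


have -> : \prod_(i < n) P (lift ord0 i) (lift ord0 i) = \prod_i C i i.
  by apply: eq_bigr => i _; rewrite /C !mxE rshift1.
exact: dCle.
Qed.

Lemma ln_ineq (R : realType) (w : R) : 0 <= w -> w <= 1 -> w <= 2 * ln (1 + w).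
Proof.
move=> w0 w1.
have p : 0 < 1 + w by lra.
have h := le_ln1Dx (x := - (w / (1 + w))) _.
have e : 1 + - (w / (1 + w)) = (1 + w)^-1.
  by field; rewrite gt_eqF.
rewrite e lnV ?posrE // in h.
have h2 : w / 2 <= w / (1 + w).
  apply: ler_wpM2l => //.
  by rewrite lef_pV2 ?posrE //; lra.
have : -1 < - (w / (1 + w)).
  rewrite ltrN2 ltr_pdivrMr //; lra.
move=> /h; lra.
Qed.

Lemma cauchy_sum (R : realFieldType) K (c : 'I_K -> R) :
  (\sum_k c k) ^+ 2 <= K%:R * \sum_k c k ^+ 2.
Proof.
rewrite expr2 mulr_suml.
have e : forall i, c i * \sum_k c k = \sum_k c i * c k by move=> i; rewrite mulr_sumr.
under eq_bigr => i _ do rewrite e.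
apply: (@le_trans _ _ (\sum_i \sum_k (c i ^+ 2 + c k ^+ 2) / 2)).
  apply: ler_sum => i _; apply: ler_sum => k _.
  have := sqr_ge0 (c i - c k); rewrite sqrrB; lra.
under eq_bigr => i _ do rewrite -mulr_suml big_split /= sumr_const card_ord.
rewrite -mulr_suml big_split /= sumr_const card_ord -mulr_natr.
rewrite sumrMnl; move: (\sum_(i < K) c i ^+ 2) => S; rewrite mul1r -mulr2n -[_ *+ 2]mulr_natr mulfK ?pnatr_eq0 //.
by rewrite mulr_natl.
Qed.

Definition vn2 {R : realType} {d} (z : 'cV[R]_d) : R := \sum_i (z i 0) ^+ 2.

Lemma vn2_ge0 (R : realType) d (z : 'cV[R]_d) : 0 <= vn2 z.
Proof. by apply: sumr_ge0 => i _; exact: sqr_ge0. Qed.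

Lemma vn2_gt0 (R : realType) d (z : 'cV[R]_d) : z != 0 -> 0 < vn2 z.
Proof.
move=> nz; rewrite lt_def vn2_ge0 andbT; apply: contra nz.
rewrite psumr_eq0; last by move=> i _; exact: sqr_ge0.
move=> /allP h; apply/eqP/matrixP => i j; rewrite ord1 mxE.
have := h i (mem_index_enum _); rewrite /= sqrf_eq0 => /eqP ->//.
Qed.

Lemma Sigma_sym (R : realType) d (x : nat -> 'cV[R]_d) k :
  (Sigma x k)^T = Sigma x k.
Proof.
rewrite /Sigma raddfD /= tr_scalar_mx raddf_sum /=; congr (_ + _).
by apply: eq_bigr => t _; rewrite trmx_mul trmxK.
Qed.

Lemma Sigma_qf (R : realType) d (x : nat -> 'cV[R]_d) k z :
  qf (Sigma x k) z = vn2 z + \sum_(t < k) (((x t)^T *m z) 0 0) ^+ 2.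
Proof.
rewrite /qf /Sigma mulmxDr mulmxDl mulmx1 mulmx_sumr mulmx_suml mxE summxE.
congr (_ + _).
  by rewrite /vn2 mxE; apply: eq_bigr => i _; rewrite mxE expr2.
apply: eq_bigr => t _.
rewrite !mulmxA -mulmxA -[z^T *m x t]trmxK trmx_mul trmxK mxE big_ord1 mxE.
by rewrite expr2.
Qed.

Lemma Sigma_pd (R : realType) d (x : nat -> 'cV[R]_d) k z :
  vn2 z <= qf (Sigma x k) z.
Proof.
rewrite Sigma_qf lerDl; apply: sumr_ge0 => t _; exact: sqr_ge0.
Qed.

Lemma Sigma_det (R : realType) d (x : nat -> 'cV[R]_d) k :
  0 < \det (Sigma x k) /\ \det (Sigma x k) <= \prod_i Sigma x k i i.
Proof.
apply: hadamard; first exact: Sigma_sym.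
move=> z nz; have h1 := vn2_gt0 _ _ _ nz; have h2 := Sigma_pd _ _ x k z; exact: lt_le_trans h1 h2.
Qed.

Lemma Sigma_unit (R : realType) d (x : nat -> 'cV[R]_d) k :
  Sigma x k \in unitmx.
Proof.
by rewrite unitmxE unitfE gt_eqF //; case: (Sigma_det _ _ x k).
Qed.

Lemma w_bound (R : realType) d (x : nat -> 'cV[R]_d) k (v : 'cV[R]_d) :
  vn2 v <= 1 -> 0 <= qf (invmx (Sigma x k)) v /\ qf (invmx (Sigma x k)) v <= 1.
Proof.
move=> hv.
have Su := Sigma_unit _ _ x k.
set S := Sigma x k in Su *.
set y := invmx S *m v.
have e1 : qf (invmx S) v = (v^T *m y) 0 0 by rewrite /qf -mulmxA.
have e2 : qf S y = (v^T *m y) 0 0.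
  rewrite /qf -mulmxA /y mulKVmx //.
  by rewrite -[_^T *m v]trmxK trmx_mul trmxK [in LHS]mxE.
have h := Sigma_pd _ _ x k y; rewrite -/S e2 in h.
have e3 : (v^T *m y) 0 0 = \sum_i v i 0 * y i 0.
  by rewrite mxE; apply: eq_bigr => i _; rewrite mxE.
have h2 : 2 * (v^T *m y) 0 0 <= vn2 v + vn2 y.
  rewrite e3 /vn2 -big_split mulr_sumr; apply: ler_sum => i _ /=.
  have := sqr_ge0 (v i 0 - y i 0); rewrite sqrrB; lra.
have := vn2_ge0 _ _ y; rewrite e1; lra.
Qed.

Lemma Sigma_rec (R : realType) d (x : nat -> 'cV[R]_d) k :
  \det (Sigma x k.+1) = \det (Sigma x k) * (1 + qf (invmx (Sigma x k)) (x k)).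
Proof.
have Su := Sigma_unit _ _ x k.
have -> : Sigma x k.+1 = Sigma x k *m (1%:M + (invmx (Sigma x k) *m x k) *m (x k)^T).
  rewrite mulmxDr mulmx1 !mulmxA mulmxV // mul1mx.
  by rewrite /Sigma big_ord_recr /= addrA.
by rewrite det_mulmx det_rank1 /qf mulmxA.
Qed.

Lemma Sigma_prod (R : realType) d (x : nat -> 'cV[R]_d) K :
  \prod_(k < K) (1 + qf (invmx (Sigma x k)) (x k)) = \det (Sigma x K).
Proof.
elim: K => [|K IH].
  by rewrite big_ord0 /Sigma big_ord0 addr0 det1.
by rewrite big_ord_recr /= IH Sigma_rec.
Qed.

Lemma Sigma_diag (R : realType) d (x : nat -> 'cV[R]_d) K i :
  Sigma x K i i = 1 + \sum_(t < K) (x t i 0) ^+ 2.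
Proof.
rewrite /Sigma !mxE eqxx summxE; congr (_ + _).
by apply: eq_bigr => t _; rewrite mxE big_ord1 mxE expr2.
Qed.

Lemma Sigma_bound (R : realType) d (x : nat -> 'cV[R]_d) K :
  (forall t, vn2 (x t) <= 1) ->
  \det (Sigma x K) <= (1 + K%:R / d%:R) ^+ d.
Proof.
move=> hx.
have [_ hd] := Sigma_det _ _ x K; apply: le_trans hd _.
have pos : forall i, 0 <= Sigma x K i i.
  move=> i; rewrite Sigma_diag; apply: addr_ge0 => //.
  by apply: sumr_ge0 => t _; exact: sqr_ge0.
have AG := leif_AGM (I := 'I_d) (A := predT) (E := fun i => Sigma x K i i)
   (fun i _ => pos i).
move: AG => /= [+ _].
rewrite cardT size_enum_ord.
move=> h; apply: le_trans h _.
have hs : \sum_(i in predT) Sigma x K i i <= d%:R + K%:R.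
  have -> : \sum_(i in predT) Sigma x K i i = d%:R + \sum_(t < K) vn2 (x t).
    rewrite (eq_bigr _ (fun i _ => Sigma_diag _ _ x K i)) big_split /=.
    rewrite sumr_const cardT size_enum_ord; congr (_ + _).
    by rewrite exchange_big.
  rewrite lerD2l; apply: (@le_trans _ _ (\sum_(t < K) (1 : R))).
    by apply: ler_sum => t _; exact: hx.
  by rewrite sumr_const card_ord.
have s0 : 0 <= \sum_(i in predT) Sigma x K i i by apply: sumr_ge0 => i _.
apply: lerXn2r.
- by rewrite nnegrE divr_ge0.
- by rewrite nnegrE addr_ge0 // divr_ge0.
have [d0|dpos] := eqVneq (d%:R : R) 0.
  by rewrite d0 invr0 !mulr0 addr0 ler01.
have dp : 0 < (d%:R : R) by rewrite lt_def dpos ler0n.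
rewrite ler_pdivrMr // mulrDl mul1r divfK //.
Qed.

Lemma ln_prod (R : realType) K (f : nat -> R) :
  (forall k, 0 < f k) -> ln (\prod_(k < K) f k) = \sum_(k < K) ln (f k).
Proof.
move=> fp; elim: K => [|K IH]; first by rewrite !big_ord0 ln1.
rewrite !big_ord_recr /= lnM ?IH // posrE //.
by apply: prodr_gt0 => k _.
Qed.

Lemma sum_w_bound (R : realType) d (x : nat -> 'cV[R]_d) K :
  (forall t, vn2 (x t) <= 1) ->
  \sum_(k < K) qf (invmx (Sigma x k)) (x k) <= 2 * (d%:R * ln (1 + K%:R / d%:R)).
Proof.
move=> hx.
have wb := fun k => w_bound _ _ x k (x k) (hx k).
apply: (@le_trans _ _ (\sum_(k < K) 2 * ln (1 + qf (invmx (Sigma x k)) (x k)))).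
  by apply: ler_sum => k _; have [w0 w1] := wb k; exact: ln_ineq.
rewrite -mulr_sumr ler_pM2l // -(ln_prod _ K (fun k => 1 + qf (invmx (Sigma x k)) (x k))); last first.
  by move=> k; have [w0 _] := wb k; lra.
have qp : 0 < 1 + K%:R / d%:R :> R.
  have h0 : 0 <= K%:R / d%:R :> R by rewrite divr_ge0.
  lra.
rewrite Sigma_prod [d%:R * _]mulr_natl -lnXn //.
rewrite ler_ln ?posrE; last exact: exprn_gt0.
  exact: Sigma_bound.
by case: (Sigma_det _ _ x K).
Qed.

Lemma sum_sqrt_bound (R : realType) d (x : nat -> 'cV[R]_d) K :
  (forall t, vn2 (x t) <= 1) ->
  \sum_(k < K) Num.sqrt (qf (invmx (Sigma x k)) (x k))
   <= Num.sqrt (2 * K%:R * d%:R * ln (1 + K%:R / d%:R)).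
Proof.
move=> hx.
have wb := fun k => w_bound _ _ x k (x k) (hx k).
have hc := cauchy_sum _ _ (fun k : 'I_K => Num.sqrt (qf (invmx (Sigma x k)) (x k))).
have e : \sum_(k < K) Num.sqrt (qf (invmx (Sigma x k)) (x k)) ^+ 2
       = \sum_(k < K) qf (invmx (Sigma x k)) (x k).
  by apply: eq_bigr => k _; rewrite sqr_sqrtr //; case: (wb k).
rewrite e in hc.
have hs := sum_w_bound _ _ x K hx.
have s0 : 0 <= \sum_(k < K) Num.sqrt (qf (invmx (Sigma x k)) (x k)).
  by apply: sumr_ge0 => k _; exact: sqrtr_ge0.
rewrite -(ger0_norm s0) -sqrtr_sqr ler_sqrt; last first.
  rewrite !mulr_ge0 // ln_ge0 // lerDl divr_ge0 //.
apply: (le_trans hc).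
have -> : 2 * K%:R * d%:R * ln (1 + K%:R / d%:R) =
          K%:R * (2 * (d%:R * ln (1 + K%:R / d%:R))) :> R by ring.
by apply: ler_wpM2l.
Qed.

Theorem lemma8 (R : realType) (S A : Type) (H K d : nat)
  (phi : nat -> S -> A -> 'cV[R]_d)
  (dstar dmu : nat -> S -> A -> R)
  (s : nat -> nat -> S) (a : nat -> nat -> A)
  (hphi : forall h x u, vnorm2 (phi h x u) <= 1)
  (hdstar : forall h x u, 0 <= dstar h x u <= 1)
  (hdmu : forall h x u, 0 <= dmu h x u <= 1)
  (hcover : forall h x u, (h < H)%N -> 0 < dstar h x u -> 0 < dmu h x u)
  (hkappa : forall h, (h < H)%N -> 0 < kappa_inv (dmu h)) :
  forall h, (h < H)%N ->
  \sum_(k < K)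
     dstar h (s k h) (a k h) / dmu h (s k h) (a k h)
     * mxnorm (invmx (Sigma (fun t => phi h (s t h) (a t h)) k))
              (phi h (s k h) (a k h))
  <= (kappa_inv (dmu h))^-1
     * Num.sqrt (2 * K%:R * d%:R * ln (1 + K%:R / d%:R)).
Proof.
move=> h hH.
pose x := fun t => phi h (s t h) (a t h).
have hx : forall t, vn2 (x t) <= 1.
  move=> t; have := hphi h (s t h) (a t h); rewrite /vnorm2 => h1.
  rewrite -(sqr_sqrtr (vn2_ge0 _ _ (x t))); exact: exprn_ile1 (sqrtr_ge0 _) h1.
have kpos := hkappa h hH.
have klow : forall y u, 0 < dmu h y u -> kappa_inv (dmu h) <= dmu h y u.
  move=> y u p; rewrite /kappa_inv; apply: ge_inf.
    by exists 0 => z [s0 [a0 [p0 ->]]]; exact: ltW.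
  by exists y, u.
have tb : forall k : 'I_K,
   dstar h (s k h) (a k h) / dmu h (s k h) (a k h)
     * mxnorm (invmx (Sigma x k)) (x k)
   <= (kappa_inv (dmu h))^-1 * Num.sqrt (qf (invmx (Sigma x k)) (x k)).
  move=> k; rewrite /mxnorm -/(qf _ _).
  have sq0 := sqrtr_ge0 (qf (invmx (Sigma x k)) (x k)).
  apply: ler_wpM2r => //.
  have [ds0 ds1] := andP (hdstar h (s k h) (a k h)).
  have [dm0 _] := andP (hdmu h (s k h) (a k h)).
  have [e0|dsp] := eqVneq (dstar h (s k h) (a k h)) 0.
    by rewrite e0 mul0r invr_ge0 ltW.
  have dsp' : 0 < dstar h (s k h) (a k h) by rewrite lt_def dsp ds0.
  have dmp := hcover h _ _ hH dsp'.
  apply: (@le_trans _ _ ((dmu h (s k h) (a k h))^-1)).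
    by rewrite -[X in _ <= X]mul1r ler_wpM2r // invr_ge0.
  by rewrite lef_pV2 ?posrE //; exact: klow.
apply: (le_trans (ler_sum _ (fun k _ => tb k))).
rewrite -mulr_sumr; apply: ler_wpM2l; first by rewrite invr_ge0 ltW.
exact: sum_sqrt_bound.
Qed.
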